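(* There is an absolute constant $C$ such that for every $0<\gamma<\frac1{15}$ there is $Q_0(\gamma)$ with the following property: for all $\zeta_1,\zeta_2\in[-1,1]$ and every integer $Q\ge Q_0(\gamma)$ there exist an integer $1\le q\le Q$ and $a=(a_1,a_2)\in\mathbb{Z}^2$ with $$\max_{j=1,2}\Big|\zeta_j-\frac{a_j}{q}\Big|\le\frac{C}{q^{1/2}Q^{\frac12+\gamma}}.$$ *)

(* Defs.v *)
From Stdlib Require Import Reals Lra Lia ZArith.

(* Main.v *)
Require Import Defs.
From Stdlib Require Import Reals ZArith Lra Lia List Classical.
Open Scope R_scope.

Lemma pigeon {A : Type} (f : A -> nat) (k : nat) : forall B (l : list A),
  (forall x, In x l -> (f x < B)%nat) -> (k * B < length l)%nat ->
  exists b, (k < length (filter (fun x => Nat.eqb (f x) b) l))%nat.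
Proof.
  induction B as [|B IH]; intros l Hl Hlen.
  - destruct l as [|x l]; simpl in Hlen; [lia|].
    specialize (Hl x (or_introl eq_refl)); lia.
  - destruct (Nat.lt_ge_cases k (length (filter (fun x => Nat.eqb (f x) B) l))) as [H|H].
    + exists B; exact H.
    + assert (Hsplit := filter_length (fun x => Nat.eqb (f x) B) l).
      destruct (IH (filter (fun x => negb (Nat.eqb (f x) B)) l)) as [b Hb].
      * intros x Hx. apply filter_In in Hx as [Hx1 Hx2].
        specialize (Hl x Hx1). apply Bool.negb_true_iff, Nat.eqb_neq in Hx2. lia.
      * nia.
      * exists b.
        eapply Nat.lt_le_trans; [exact Hb|].
        clear. induction l as [|x l IH]; simpl; [lia|].
        destruct (Nat.eqb (f x) B); destruct (Nat.eqb (f x) b) eqn:E; simpl; try rewrite E; simpl; lia.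
Qed.

Definition bx (N : nat) (z : R) (q : nat) : nat :=
  Z.to_nat (Int_part (INR N * frac_part (INR q * z))).

Lemma Int_part_range (y : R) (N : nat) : 0 <= y < INR N ->
  (0 <= Int_part y)%Z /\ (Int_part y < Z.of_nat N)%Z.
Proof.
  intros Hy. destruct (base_Int_part y) as [H1 H2]. split.
  - assert (-1 < Int_part y)%Z by (apply lt_IZR; lra). lia.
  - apply lt_IZR. rewrite <- INR_IZR_INZ. lra.
Qed.

Lemma bx_lt N z q : (0 < N)%nat -> (bx N z q < N)%nat.
Proof.
  intros HN. unfold bx. destruct (base_fp (INR q * z)) as [F1 F2].
  assert (HN' : 0 < INR N) by (apply lt_0_INR; lia).
  destruct (Int_part_range (INR N * frac_part (INR q * z)) N) as [A B].
  { split; [apply Rmult_le_pos; lra|]. rewrite <- (Rmult_1_r (INR N)) at 2.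
    apply Rmult_lt_compat_l; lra. }
  lia.
Qed.

Lemma bx_close N z q q' : (0 < N)%nat -> bx N z q = bx N z q' ->
  Rabs (frac_part (INR q * z) - frac_part (INR q' * z)) < / INR N.
Proof.
  intros HN Heq. unfold bx in Heq.
  assert (HN' : 0 < INR N) by (apply lt_0_INR; lia).
  set (f := frac_part (INR q * z)) in *. set (f' := frac_part (INR q' * z)) in *.
  assert (Rg : forall g, 0 <= g < 1 -> 0 <= INR N * g < INR N).
  { intros g Hg. split; [apply Rmult_le_pos; lra|]. rewrite <- (Rmult_1_r (INR N)) at 2.
    apply Rmult_lt_compat_l; lra. }
  destruct (base_fp (INR q * z)) as [F1 F2]. destruct (base_fp (INR q' * z)) as [G1 G2].
  fold f in F1, F2. fold f' in G1, G2.
  destruct (Int_part_range _ _ (Rg f ltac:(lra))) as [A1 _].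
  destruct (Int_part_range _ _ (Rg f' ltac:(lra))) as [A2 _].
  apply Z2Nat.inj in Heq; try lia.
  destruct (base_Int_part (INR N * f)) as [B1 B2].
  destruct (base_Int_part (INR N * f')) as [C1 C2]. rewrite Heq in B1, B2.
  assert (Habs : Rabs (INR N * f - INR N * f') < 1) by (apply Rabs_def1; lra).
  rewrite <- Rmult_minus_distr_l, Rabs_mult, Rabs_right in Habs by lra.
  apply (Rmult_lt_reg_l (INR N)); [lra|]. rewrite Rinv_r; lra.
Qed.

Lemma filter_seq_head (p : nat -> bool) : forall n s q0 L',
  filter p (seq s n) = q0 :: L' -> forall x, In x L' -> (q0 < x)%nat.
Proof.
  induction n as [|n IH]; intros s q0 L' H x Hx; simpl in H; [discriminate|].
  destruct (p s) eqn:E.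
  - injection H as <- <-. apply filter_In in Hx as [Hx _]. apply in_seq in Hx. lia.
  - eapply IH; eauto.
Qed.

Lemma diff_err z x y : (y <= x)%nat ->
  INR (x - y) * z - IZR (Int_part (INR x * z) - Int_part (INR y * z)) =
  frac_part (INR x * z) - frac_part (INR y * z).
Proof. intros H. unfold frac_part. rewrite minus_INR by exact H. rewrite minus_IZR. ring. Qed.

Lemma noncol z N u v a b :
  (0 < N)%nat -> (0 < u)%nat ->
  Rabs (INR u * z - IZR a) < / INR N -> Rabs (INR v * z - IZR b) < / INR N ->
  (Z.of_nat v * a <> Z.of_nat u * b)%Z -> (N < u + v)%nat.
Proof.
  intros HN Hu0 Hu Hv Hne.
  assert (HN' : 0 < INR N) by (apply lt_0_INR; lia).
  set (D := (Z.of_nat v * a - Z.of_nat u * b)%Z).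
  assert (HD : 1 <= Rabs (IZR D)).
  { rewrite <- abs_IZR. apply IZR_le. unfold D. lia. }
  assert (E : IZR D = INR u * (INR v * z - IZR b) - INR v * (INR u * z - IZR a)).
  { unfold D. rewrite minus_IZR, !mult_IZR, <- !INR_IZR_INZ. ring. }
  rewrite E in HD.
  assert (Rabs (INR u * (INR v * z - IZR b) - INR v * (INR u * z - IZR a))
    <= INR u * Rabs (INR v * z - IZR b) + INR v * Rabs (INR u * z - IZR a)).
  { set (X := INR v * z - IZR b). set (Y := INR u * z - IZR a). unfold Rminus at 1.
    eapply Rle_trans; [apply Rabs_triang|]. rewrite Rabs_Ropp, !Rabs_mult, !(Rabs_pos_eq (INR _)) by apply pos_INR. lra. }
  assert (INR u * Rabs (INR v * z - IZR b) < INR u * / INR N) by (apply Rmult_lt_compat_l; [apply lt_0_INR; lia|lra]).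
  assert (INR v * Rabs (INR u * z - IZR a) <= INR v * / INR N) by (apply Rmult_le_compat_l; [apply pos_INR|lra]).
  assert (Hlt : INR N < INR (u + v)).
  { rewrite plus_INR.
    destruct (Nat.eq_dec (u+v) 0) as [Hz|Hz].
    - assert (u = 0)%nat by lia. assert (v = 0)%nat by lia. subst. simpl in *. lra.
    - assert (1 < (INR u + INR v) * / INR N) by nra.
      apply (Rmult_lt_reg_r (/ INR N)); [apply Rinv_0_lt_compat; lra|]. rewrite Rinv_r; lra. }
  apply INR_lt; exact Hlt.
Qed.

Lemma min_exists (P : nat -> Prop) n : P n -> exists m, P m /\ forall m', P m' -> (m <= m')%nat.
Proof.
  revert n. induction n as [n IH] using (well_founded_induction lt_wf). intros Hn.
  destruct (classic (exists m', P m' /\ (m' < n)%nat)) as [[m' [Hm' Hlt]]|Hno].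
  - exact (IH m' Hlt Hm').
  - exists n. split; [exact Hn|]. intros m' Hm'. destruct (Nat.lt_ge_cases m' n); [|lia].
    exfalso. apply Hno. eauto.
Qed.

Lemma nodup_big (l : list nat) k : (1 <= k)%nat -> NoDup l -> (k <= length l)%nat -> (forall t, In t l -> (1 <= t)%nat) ->
  exists t, In t l /\ (k <= t)%nat.
Proof.
  intros Hk Hnd Hlen Hpos. destruct (classic (exists t, In t l /\ (k <= t)%nat)) as [H|H]; [exact H|].
  exfalso. assert (Hinc : incl l (seq 1 (k - 1))).
  { intros t Ht. apply in_seq. specialize (Hpos t Ht).
    destruct (Nat.lt_ge_cases t k); [lia|]. exfalso; eauto. }
  pose proof (NoDup_incl_length Hnd Hinc). rewrite length_seq in H0.
  lia.
Qed.

Lemma decode N i1 i2 j1 j2 : (i2 < N)%nat -> (j2 < N)%nat -> (i1 * N + i2 = j1 * N + j2)%nat ->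
  i1 = j1 /\ i2 = j2.
Proof.
  intros H1 H2 H. destruct (Nat.lt_trichotomy i1 j1) as [L|[L|L]].
  - exfalso. assert (i1 * N + N <= j1 * N)%nat by nia. lia.
  - subst. lia.
  - exfalso. assert (j1 * N + N <= i1 * N)%nat by nia. lia.
Qed.

Lemma scale_err t e N k : (1 <= k <= t)%nat -> (0 < N)%nat ->
  Rabs (INR t * e) < / INR N -> Rabs e < / (INR N * INR k).
Proof.
  intros Hkt HN H. rewrite Rabs_mult, Rabs_pos_eq in H by apply pos_INR.
  assert (HN' : 0 < INR N) by (apply lt_0_INR; lia).
  assert (Hk' : 1 <= INR k) by (apply (le_INR 1); lia).
  assert (Ht : INR k <= INR t) by (apply le_INR; lia).
  assert (INR k * Rabs e < / INR N) by (pose proof (Rabs_pos e); nra).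
  rewrite Rinv_mult. apply (Rmult_lt_reg_l (INR k)); [lra|].
  replace (INR k * (/ INR N * / INR k)) with (/ INR N) by (field; lra). lra.
Qed.

Lemma core (z1 z2 : R) (N k : nat) : (0 < N)%nat -> (0 < k)%nat ->
  exists (q : nat) (a1 a2 : Z), (1 <= q <= k * N * N)%nat /\
  ( ((N < 2 * q)%nat /\ Rabs (INR q * z1 - IZR a1) < / INR N /\ Rabs (INR q * z2 - IZR a2) < / INR N)
   \/ (Rabs (INR q * z1 - IZR a1) < / (INR N * INR k) /\ Rabs (INR q * z2 - IZR a2) < / (INR N * INR k))).
Proof.
  intros HN Hk.
  set (box := fun q => (bx N z1 q * N + bx N z2 q)%nat).
  set (l := seq 0 (S (k * N * N))).
  destruct (pigeon box k (N * N) l) as [b0 Hb0].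
  { intros x _. unfold box. pose proof (bx_lt N z1 x HN). pose proof (bx_lt N z2 x HN). nia. }
  { unfold l. rewrite length_seq. nia. }
  set (Fb := filter (fun x => Nat.eqb (box x) b0) l) in Hb0.
  assert (HFnd : NoDup Fb) by (apply NoDup_filter, seq_NoDup).
  assert (HFin : forall x, In x Fb -> box x = b0 /\ (x <= k * N * N)%nat).
  { intros x Hx. apply filter_In in Hx as [Hx1 Hx2]. apply Nat.eqb_eq in Hx2.
    apply in_seq in Hx1. split; [exact Hx2|lia]. }
  destruct Fb as [|q0 L'] eqn:EF; [simpl in Hb0; lia|].
  assert (Hgt : forall x, In x L' -> (q0 < x)%nat) by (eapply filter_seq_head; exact EF).
  assert (HL'len : (k <= length L')%nat) by (simpl in Hb0; lia).
  assert (HL'nd : NoDup L') by (inversion HFnd; assumption).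
  set (d := fun x => (x - q0)%nat).
  set (A1 := fun x => (Int_part (INR x * z1) - Int_part (INR q0 * z1))%Z).
  set (A2 := fun x => (Int_part (INR x * z2) - Int_part (INR q0 * z2))%Z).
  assert (Happ : forall x, In x L' ->
     (1 <= d x <= k * N * N)%nat /\
     Rabs (INR (d x) * z1 - IZR (A1 x)) < / INR N /\ Rabs (INR (d x) * z2 - IZR (A2 x)) < / INR N).
  { intros x Hx. pose proof (Hgt x Hx) as Hq.
    destruct (HFin x (or_intror Hx)) as [B1 B2]. destruct (HFin q0 (or_introl eq_refl)) as [C1 C2].
    rewrite <- C1 in B1. unfold box in B1.
    destruct (decode N _ _ _ _ (bx_lt N z2 x HN) (bx_lt N z2 q0 HN) B1) as [E1 E2].
    unfold d, A1, A2. rewrite !diff_err by lia.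
    split; [lia|]. split; apply bx_close; assumption. }
  destruct L' as [|x1 rest]; [simpl in HL'len; lia|].
  set (u := d x1).
  destruct (Happ x1 (or_introl eq_refl)) as [Hu [Hu1 Hu2]].
  destruct (classic (exists x, In x (x1 :: rest) /\
     ((Z.of_nat (d x) * A1 x1 <> Z.of_nat u * A1 x)%Z \/ (Z.of_nat (d x) * A2 x1 <> Z.of_nat u * A2 x)%Z)))
    as [[x [Hx Hne]]|Hcol].
  -
    destruct (Happ x Hx) as [Hv [Hv1 Hv2]].
    assert (Hsum : (N < u + d x)%nat).
    { destruct Hne as [Hne|Hne].
      - eapply (noncol z1 N u (d x)); eauto; lia.
      - eapply (noncol z2 N u (d x)); eauto; lia. }
    destruct (Nat.lt_ge_cases N (2 * u)) as [Hbig|Hsmall].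
    + exists u, (A1 x1), (A2 x1). split; [lia|]. left. auto.
    + exists (d x), (A1 x), (A2 x). split; [lia|]. left. split; [lia|]. auto.
  -
    assert (Hc : forall x, In x (x1 :: rest) ->
      (Z.of_nat (d x) * A1 x1 = Z.of_nat u * A1 x)%Z /\ (Z.of_nat (d x) * A2 x1 = Z.of_nat u * A2 x)%Z).
    { intros x Hx. destruct (classic (Z.of_nat (d x) * A1 x1 = Z.of_nat u * A1 x)%Z);
      destruct (classic (Z.of_nat (d x) * A2 x1 = Z.of_nat u * A2 x)%Z); auto;
      exfalso; apply Hcol; eauto. }
    set (P := fun m => (0 < m)%nat /\ exists c1 c2 : Z,
      (Z.of_nat m * A1 x1 = Z.of_nat u * c1)%Z /\ (Z.of_nat m * A2 x1 = Z.of_nat u * c2)%Z).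
    destruct (min_exists P u) as [m0 [[Hm0 [c1 [c2 [Hc1 Hc2]]]] Hmin]].
    { split; [lia|]. exists (A1 x1), (A2 x1). split; ring. }
    assert (Hm0u : (m0 <= u)%nat) by (apply Hmin; split; [lia|]; exists (A1 x1), (A2 x1); split; ring).
    assert (Hdiv : forall x, In x (x1 :: rest) ->
      d x = (m0 * (d x / m0))%nat /\ A1 x = (Z.of_nat (d x / m0) * c1)%Z /\ A2 x = (Z.of_nat (d x / m0) * c2)%Z).
    { intros x Hx. destruct (Hc x Hx) as [Hx1 Hx2].
      pose proof (Nat.div_mod (d x) m0 ltac:(lia)) as Hdm.
      pose proof (Nat.mod_upper_bound (d x) m0 ltac:(lia)) as Hmu.
      set (t := (d x / m0)%nat) in *. set (s := (d x mod m0)%nat) in *.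
      assert (Hs : s = 0%nat).
      { destruct (Nat.eq_dec s 0) as [|Hs]; [assumption|]. exfalso.
        assert (HPs : P s).
        { split; [lia|]. exists (A1 x - Z.of_nat t * c1)%Z, (A2 x - Z.of_nat t * c2)%Z.
          assert (Es : Z.of_nat s = (Z.of_nat (d x) - Z.of_nat m0 * Z.of_nat t)%Z) by lia.
          rewrite Es. split; nia. }
        specialize (Hmin s HPs). lia. }
      rewrite Hs, Nat.add_0_r in Hdm. split; [exact Hdm|].
      assert (Hu0 : Z.of_nat u <> 0%Z) by lia.
      rewrite Hdm, Nat2Z.inj_mul in Hx1, Hx2. split.
      - apply (Z.mul_cancel_l _ _ _ Hu0). rewrite <- Hx1. nia.
      - apply (Z.mul_cancel_l _ _ _ Hu0). rewrite <- Hx2. nia. }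
    set (t := fun x => (d x / m0)%nat).
    assert (Htnd : NoDup (map t (x1 :: rest))).
    { apply NoDup_map_NoDup_ForallPairs; [|exact HL'nd].
      intros x y Hx Hy Htxy. destruct (Hdiv x Hx) as [Dx _]. destruct (Hdiv y Hy) as [Dy _].
      pose proof (Hgt x Hx). pose proof (Hgt y Hy). unfold t in Htxy.
      assert (d x = d y) by (rewrite Dx, Dy, Htxy; reflexivity). unfold d in *. lia. }
    destruct (nodup_big (map t (x1 :: rest)) k ltac:(lia) Htnd) as [tt [Htt Hktt]].
    { rewrite length_map. exact HL'len. }
    { intros tt Htt. apply in_map_iff in Htt as [x [<- Hx]]. destruct (Hdiv x Hx) as [Dx _].
      destruct (Happ x Hx) as [Hdx _]. unfold t. destruct (d x / m0)%nat; lia. }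
    apply in_map_iff in Htt as [x [Etx Hx]].
    destruct (Hdiv x Hx) as [Dx [Ax1 Ax2]]. destruct (Happ x Hx) as [_ [Ex1 Ex2]].
    exists m0, c1, c2. split; [lia|]. right.
    assert (Hk1 : (1 <= k <= t x)%nat) by lia.
    split; apply (scale_err (t x) _ N k Hk1 HN).
    + rewrite Dx, Ax1 in Ex1. unfold t. rewrite mult_INR, mult_IZR, <- INR_IZR_INZ in Ex1.
      replace (INR m0 * INR (d x / m0) * z1 - INR (d x / m0) * IZR c1) with
        (INR (d x / m0) * (INR m0 * z1 - IZR c1)) in Ex1 by ring. exact Ex1.
    + rewrite Dx, Ax2 in Ex2. unfold t. rewrite mult_INR, mult_IZR, <- INR_IZR_INZ in Ex2.
      replace (INR m0 * INR (d x / m0) * z2 - INR (d x / m0) * IZR c2) with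
        (INR (d x / m0) * (INR m0 * z2 - IZR c2)) in Ex2 by ring. exact Ex2.
Qed.

Lemma floor_nat y : 0 <= y -> INR (Z.to_nat (Int_part y)) <= y /\ y - 1 < INR (Z.to_nat (Int_part y)).
Proof.
  intros Hy. destruct (base_Int_part y) as [H1 H2].
  assert (-1 < Int_part y)%Z by (apply lt_IZR; lra).
  rewrite INR_IZR_INZ, Z2Nat.id by lia. lra.
Qed.

Lemma fin_ineq E B q s P C : 0 < q -> 0 < s -> 0 < P -> 0 <= E -> E < B -> B * s * P <= C * q ->
  E / q <= C / (s * P).
Proof.
  intros Hq Hs HP HE HEB HB.
  replace (E / q) with ((E * s * P) * / (q * s * P)) by (field; lra).
  replace (C / (s * P)) with ((C * q) * / (q * s * P)) by (field; lra).
  apply Rmult_le_compat_r; [left; apply Rinv_0_lt_compat; apply Rmult_lt_0_compat; [nra|lra]|].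
  assert (0 < s * P) by nra.
  assert (E * (s * P) <= B * (s * P)) by (apply Rmult_le_compat_r; lra).
  replace (E * s * P) with (E * (s * P)) by ring.
  replace (B * s * P) with (B * (s * P)) in HB by ring. lra.
Qed.

Lemma approx_rewrite z a q : (0 < q)%nat -> Rabs (z - IZR a / INR q) = Rabs (INR q * z - IZR a) / INR q.
Proof.
  intros H. assert (0 < INR q) by (apply lt_0_INR; lia).
  replace (INR q * z - IZR a) with (INR q * (z - IZR a / INR q)) by (field; lra).
  rewrite Rabs_mult, (Rabs_pos_eq (INR q)) by lra. field. lra.
Qed.

Lemma div_le_h a c d : 0 < d -> a <= c * d -> a / d <= c.
Proof.
  intros Hd H. replace c with ((c * d) / d) by (field; lra).
  unfold Rdiv. apply Rmult_le_compat_r; [left; apply Rinv_0_lt_compat; lra|lra].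
Qed.

Theorem lemma2p5 :
  exists C : R,
    forall gamma : R, 0 < gamma < 1 / 15 ->
      exists Q0 : nat,
        forall (zeta1 zeta2 : R), -1 <= zeta1 <= 1 -> -1 <= zeta2 <= 1 ->
        forall Q : nat, (Q0 <= Q)%nat ->
          exists (q : nat) (a1 a2 : Z),
            (1 <= q <= Q)%nat /\
            Rmax (Rabs (zeta1 - IZR a1 / INR q)) (Rabs (zeta2 - IZR a2 / INR q))
              <= C / (sqrt (INR q) * Rpower (INR Q) (1 / 2 + gamma)).
Proof.
  exists 4. intros gamma Hg. exists 32%nat. intros z1 z2 _ _ Q HQ.
  assert (HQr : 32 <= INR Q) by (replace 32 with (INR 32) by (simpl; lra); apply le_INR; lia).
  set (X := Rpower (INR Q) (1/5)).
  assert (HX2 : 2 <= X).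
  { unfold X. replace 2 with (Rpower 32 (1/5)).
    - apply Rle_Rpower_l; lra.
    - replace 32 with (Rpower 2 (INR 5)) by (rewrite Rpower_pow by lra; simpl; lra).
      rewrite Rpower_mult. replace (INR 5 * (1/5)) with 1 by (simpl; field). apply Rpower_1; lra. }
  assert (HX5 : X ^ 5 = INR Q).
  { rewrite <- Rpower_pow by lra. unfold X. rewrite Rpower_mult.
    replace (1/5 * INR 5) with 1 by (simpl; field). apply Rpower_1; lra. }
  assert (HP : Rpower (INR Q) (1/2 + gamma) <= X ^ 3).
  { rewrite <- Rpower_pow by lra. unfold X. rewrite Rpower_mult.
    apply Rle_Rpower; [lra|]. simpl. lra. }
  assert (HPpos : 0 < Rpower (INR Q) (1/2 + gamma)) by (unfold Rpower; apply exp_pos).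
  set (N := Z.to_nat (Int_part (X * X))).
  set (k := Z.to_nat (Int_part X)).
  destruct (floor_nat (X * X) ltac:(nra)) as [N1 N2]. fold N in N1, N2.
  destruct (floor_nat X ltac:(lra)) as [K1 K2]. fold k in K1, K2.
  assert (HN : (0 < N)%nat) by (apply INR_lt; simpl; nra).
  assert (Hk : (0 < k)%nat) by (apply INR_lt; simpl; nra).
  assert (HkNN : (k * N * N <= Q)%nat).
  { apply INR_le. rewrite !mult_INR, <- HX5.
    assert (0 <= INR N) by apply pos_INR. assert (0 <= INR k) by apply pos_INR.
    assert (INR k * INR N <= X * (X * X)) by (apply Rmult_le_compat; lra).
    assert (INR k * INR N * INR N <= X * (X * X) * (X * X)) by (apply Rmult_le_compat; nra).
    simpl. nra. }
  destruct (core z1 z2 N k HN Hk) as [q [a1 [a2 [Hq Hcase]]]].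
  exists q, a1, a2. split; [lia|].
  assert (Hq0 : (0 < q)%nat) by lia.
  assert (Hqr : 1 <= INR q) by (apply (le_INR 1); lia).
  assert (Hs1 : 1 <= sqrt (INR q)) by (rewrite <- sqrt_1; apply sqrt_le_1_alt; lra).
  assert (Hss : sqrt (INR q) * sqrt (INR q) = INR q) by (apply sqrt_sqrt; lra).
  rewrite !approx_rewrite by exact Hq0.
  assert (HNr : X * X / 2 <= INR N) by nra.
  assert (HKr : X / 2 <= INR k) by lra.
  destruct Hcase as [[Hbig [E1 E2]]|[E1 E2]].
  - assert (HqN : INR N < 2 * INR q).
    { replace 2 with (INR 2) by (simpl; lra). rewrite <- mult_INR. apply lt_INR. lia. }
    assert (Hsx : X / 2 <= sqrt (INR q)).
    { destruct (Rle_lt_dec (X/2) (sqrt (INR q))) as [|Hl]; [assumption|]. nra. }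
    assert (Hkey : / INR N * sqrt (INR q) * Rpower (INR Q) (1/2 + gamma) <= 4 * INR q).
    { assert (0 < INR N) by (apply lt_0_INR; lia).
      replace (/ INR N * sqrt (INR q) * Rpower (INR Q) (1/2 + gamma))
        with (sqrt (INR q) * Rpower (INR Q) (1/2 + gamma) / INR N) by (field; lra).
      apply div_le_h; [lra|].
      assert (X ^ 3 <= 4 * INR N * sqrt (INR q)) by (simpl; nra).
      assert (sqrt (INR q) * Rpower (INR Q) (1/2 + gamma) <= sqrt (INR q) * X ^ 3)
        by (apply Rmult_le_compat_l; lra).
      nra. }
    apply Rmax_lub; (eapply fin_ineq; [lra|lra|exact HPpos|apply Rabs_pos| |exact Hkey]); assumption.
  - assert (Hkey : / (INR N * INR k) * sqrt (INR q) * Rpower (INR Q) (1/2 + gamma) <= 4 * INR q).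
    { assert (0 < INR N) by (apply lt_0_INR; lia). assert (0 < INR k) by (apply lt_0_INR; lia).
      replace (/ (INR N * INR k) * sqrt (INR q) * Rpower (INR Q) (1/2 + gamma))
        with (sqrt (INR q) * Rpower (INR Q) (1/2 + gamma) / (INR N * INR k)) by (field; lra).
      apply div_le_h; [nra|].
      assert (X ^ 3 <= 4 * (INR N * INR k)) by (simpl; nra).
      assert (sqrt (INR q) * Rpower (INR Q) (1/2 + gamma) <= sqrt (INR q) * X ^ 3)
        by (apply Rmult_le_compat_l; lra).
      assert (sqrt (INR q) * X ^ 3 <= sqrt (INR q) * (4 * (INR N * INR k))) by (apply Rmult_le_compat_l; lra).
      assert (sqrt (INR q) <= INR q) by nra.
      assert (sqrt (INR q) * (4 * (INR N * INR k)) <= INR q * (4 * (INR N * INR k)))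
        by (apply Rmult_le_compat_r; nra).
      lra. }
    apply Rmax_lub; (eapply fin_ineq; [lra|lra|exact HPpos|apply Rabs_pos| |exact Hkey]); assumption.
Qed.
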